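(* Let $d$ be odd and let $H$ be a dephased $d\times d$ complex Hadamard matrix. There is no nonzero real $d\times d$ matrix $R$ with zero first row and zero first column whose nonzero entries all lie in only two columns (or all lie in only two rows) such that $H\circ\exp(i\xi R)$ is a complex Hadamard matrix for every $\xi\in\mathbb{R}$. In other words, in an affine family of complex Hadamard matrices of odd order, no parameter can appear in only two columns or only two rows.
   Context: A $d\times d$ complex Hadamard matrix has unimodular entries and pairwise orthogonal columns; it is dephased if its first row and first column consist of $1$'s. $\circ$ denotes the entrywise product and $\exp(i\xi R)$ the entrywise exponential $(\exp(i\xi R))_{jk}=e^{i\xi R_{jk}}$. An affine family stemming from a dephased $H$ is a set $\{H\circ\exp(i\sum_k\xi_kR_k)\}$ with real matrices $R_k$ having zero first row and column. *)

(* Defs.v *)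
From HB Require Import structures.
From mathcomp Require Import all_boot all_order all_algebra.
From mathcomp Require Import complex.
From mathcomp Require Import Rstruct.
From Stdlib Require Import Reals.
Set Implicit Arguments. Unset Strict Implicit. Unset Printing Implicit Defensive.
Import Order.TTheory GRing.Theory Num.Theory.
Local Open Scope ring_scope.
Import ComplexField.

Notation CC := (complex R).

Definition expi (t : R) : CC := (Rtrigo_def.cos t +i* Rtrigo_def.sin t)%C.

Definition is_complex_hadamard (d : nat) (H : 'M[CC]_d) : Prop :=
  (forall i j, `|H i j| = 1) /\
  (forall j k : 'I_d, j != k -> \sum_(i < d) H i j * (H i k)^* = 0).

Definition dephased (n : nat) (H : 'M[CC]_n.+1) : Prop :=
  (forall j, H ord0 j = 1) /\ (forall i, H i ord0 = 1).

Definition affine_member (d : nat) (H : 'M[CC]_d) (Rm : 'M[R]_d) (xi : R)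
  : 'M[CC]_d := \matrix_(i, j) (H i j * expi (xi * Rm i j)).

Definition zero_first_row_col (n : nat) (Rm : 'M[R]_n.+1) : Prop :=
  (forall j, Rm ord0 j = 0) /\ (forall i, Rm i ord0 = 0).

Definition support_in_two_columns (d : nat) (Rm : 'M[R]_d) : Prop :=
  exists j1 j2 : 'I_d, forall i j, Rm i j != 0 -> j = j1 \/ j = j2.

Definition support_in_two_rows (d : nat) (Rm : 'M[R]_d) : Prop :=
  exists i1 i2 : 'I_d, forall i j, Rm i j != 0 -> i = i1 \/ i = i2.

(* Main.v *)
Require Import Defs.
From mathcomp Require Import all_boot all_order all_algebra complex Rstruct.
From Stdlib Require Import Reals.
From Stdlib Require Import Lra.
From mathcomp Require Import lra ring.
Set Implicit Arguments. Unset Strict Implicit. Unset Printing Implicit Defensive.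
Import Order.TTheory GRing.Theory Num.Theory ComplexField.
Local Open Scope ring_scope.


Lemma unit_conj (z : complex R) : `|z| = 1 -> z * z^* = 1.
Proof. by move=> h; rewrite -normCK h expr1n. Qed.

Lemma row_orth n (H : 'M[complex R]_n.+1) : is_complex_hadamard H ->
  forall i l, \sum_k H i k * (H l k)^* = (i == l)%:R * n.+1%:R.
Proof.
move=> [hu ho].
pose A : 'M[complex R]_n.+1 := \matrix_(k, l) ((H l k)^* / n.+1%:R).
have hd : (n.+1%:R : complex R) != 0 by rewrite pnatr_eq0.
have AH : A *m H = 1%:M.
  apply/matrixP => k k'; rewrite !mxE.
  case: (eqVneq k k') => [<-|nk].
    under eq_bigr => l _ do rewrite mxE mulrAC [_^* * _]mulrC unit_conj // mul1r.
    by rewrite sumr_const card_ord -(mulr_natr (_^-1)) mulVf.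
  rewrite (eq_bigr (fun l => H l k' * (H l k)^* / n.+1%:R)); last first.
    by move=> l _; rewrite mxE mulrAC [_^* * _]mulrC.
  by rewrite -mulr_suml ho 1?eq_sym // mul0r.
have := mulmx1C AH => /matrixP HA i l.
have := HA i l; rewrite !mxE => e.
rewrite -e mulr_suml; apply: eq_bigr => k _; rewrite mxE mulrA divfK //.
Qed.


Lemma parity m (t : 'I_m.+1 -> R) : odd m.+1 ->
  (forall i, t i ^+ 2 = t ord0 ^+ 2) -> \sum_i t i = 0 -> forall i, t i = 0.
Proof.
move=> hodd hsq hs.
set tau := t ord0.
have pm : forall i, t i = tau \/ t i = - tau.
  by move=> i; move/eqP: (hsq i); rewrite eqf_sqr => /orP [/eqP|/eqP]; auto.
have e1 : \sum_i (t i + tau) = tau *+ m.+1.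
  by rewrite big_split /= hs add0r sumr_const card_ord.
have e2 : \sum_i (t i + tau) = \sum_(i | t i == tau) (2 * tau).
  rewrite [RHS]big_mkcond /=; apply: eq_bigr => i _.
  case: (pm i) => ->; first by rewrite eqxx mulr_natl mulr2n.
  case: eqP => [h|_]; last by rewrite addNr.
  by rewrite h mulr_natl mulr2n.
rewrite e2 sumr_const in e1.
set k := #|_| in e1.
have [t0|tn0] := eqVneq tau 0.
  by move=> i; case: (pm i) => ->; rewrite t0 ?oppr0.
exfalso.
have : (m.+1%:R : R) = (2 * k)%:R.
  apply: (mulIf tn0); rewrite mulr_natl -e1 natrM mulr_natl; ring.
move/eqP; rewrite eqr_nat => /eqP hm.
by move: hodd; rewrite hm oddM.
Qed.

Lemma core_real n (c s : 'I_n.+1 -> R) : odd n.+1 ->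
  (forall i, c i ^+ 2 + s i ^+ 2 = 1) -> (forall i, 0 < c i) ->
  c ord0 = 1 -> s ord0 = 0 ->
  (forall i, (n.+1%:R * c i - \sum_l c l) ^+ 2 + (n.+1%:R * s i - \sum_l s l) ^+ 2
           = (n.+1%:R * c ord0 - \sum_l c l) ^+ 2 + (n.+1%:R * s ord0 - \sum_l s l) ^+ 2) ->
  forall i, s i = 0.
Proof.
move=> hodd U P c0 s0 E.
set X := \sum_l c l in E *; set Y := \sum_l s l in E *; set d := n.+1%:R in E.
have dpos : 0 < d by rewrite ltr0n.
have Xpos : 0 < X.
  rewrite /X (bigD1 ord0) //= c0.
  have : 0 <= \sum_(i < n.+1 | i != ord0) c i by apply: sumr_ge0 => i _; apply: ltW.
  lra.
have K : forall i, c i * X + s i * Y = X.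
  move=> i; have e := E i; rewrite c0 s0 in e; have u := U i.
  have : d * (c i * X + s i * Y - X) = 0.
    have -> : d * (c i * X + s i * Y - X) =
      ((d * 1 - X) ^+ 2 + (d * 0 - Y) ^+ 2 - ((d * c i - X) ^+ 2 + (d * s i - Y) ^+ 2)
       + d ^+ 2 * (c i ^+ 2 + s i ^+ 2 - 1)) / 2 by field.
    by rewrite e u subrr add0r subrr mulr0 mul0r.
  move/eqP; rewrite mulf_eq0 gt_eqF //= subr_eq0 => /eqP //.
pose t i := s i * X - c i * Y.
have tsq : forall i, t i ^+ 2 = t ord0 ^+ 2.
  move=> i; rewrite /t c0 s0.
  have -> : (s i * X - c i * Y) ^+ 2 = (c i ^+ 2 + s i ^+ 2) * (X ^+ 2 + Y ^+ 2) - (c i * X + s i * Y) ^+ 2 by ring.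
  by rewrite U K; ring.
have tsum : \sum_i t i = 0.
  rewrite /t sumrB -!mulr_suml -/X -/Y; ring.
have := parity hodd tsq tsum => t0.
have Y0 : Y = 0 by have := t0 ord0; rewrite /t c0 s0; lra.
move=> i; have := t0 i; rewrite /t Y0 mulr0 subr0 => /eqP.
by rewrite mulf_eq0 (gt_eqF Xpos) orbF => /eqP.
Qed.

Lemma small_cos t : `|t| < 1 -> 0 < Rtrigo_def.cos t.
Proof.
move=> h; apply/RltP; have p := PI2_1.
move: h; rewrite ltr_norml => /andP [h1 h2].
have h1' : Rlt (Ropp R1) t by apply/RltP.
have h2' : Rlt t R1 by apply/RltP.
apply: cos_gt_0; Lra.lra.
Qed.

Lemma small_sin t : `|t| < 1 -> Rtrigo_def.sin t = 0 -> t = 0.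
Proof.
move=> h hs; have hs' : sin t = R0 by exact: hs.
have p := PI2_1; have q := PI2_Rlt_PI.
move: h; rewrite ltr_norml => /andP [h1 h2].
have h1' : Rlt (Ropp R1) t by apply/RltP.
have h2' : Rlt t R1 by apply/RltP.
have [tn|tp|//] := ltgtP t 0.
  have tn' : Rlt t R0 by apply/RltP.
  have : Rlt (sin t) R0 by apply: sin_lt_0_var; Lra.lra.
  rewrite hs' => h0; exfalso; Lra.lra.
have tp' : Rlt R0 t by apply/RltP.
have : Rlt R0 (sin t) by apply: sin_gt_0; Lra.lra.
rewrite hs' => h0; exfalso; Lra.lra.
Qed.

Lemma cs1 t : Rtrigo_def.cos t ^+ 2 + Rtrigo_def.sin t ^+ 2 = 1.
Proof. have := sin2_cos2 t; rewrite /Rsqr !RmultE RplusE -!expr2 addrC; exact. Qed.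


Lemma sumC (m : nat) (f g : 'I_m -> R) :
  \sum_l (f l +i* g l)%C = ((\sum_l f l) +i* (\sum_l g l))%C.
Proof.
elim: m f g => [|m IH] f g; first by rewrite !big_ord0.
by rewrite !big_ord_recr /= IH.
Qed.

Lemma wform (d : nat) (c s X Y : R) :
  d%:R * (c +i* s)%C - (X +i* Y)%C = ((d%:R * c - X) +i* (d%:R * s - Y))%C.
Proof.
rewrite -(rmorph_nat (real_complex R)).
apply/eqP; rewrite eq_complex /=; apply/andP; split; apply/eqP; ring.
Qed.

Lemma col_zero n (H : 'M[complex R]_n.+1) (Rm : 'M[R]_n.+1) (j j' : 'I_n.+1) :
  odd n.+1 -> is_complex_hadamard H -> j != j' ->
  (forall i k, k != j -> k != j' -> Rm i k = 0) -> Rm ord0 j = 0 ->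
  (forall xi, is_complex_hadamard (affine_member H Rm xi)) ->
  forall i, Rm i j = 0.
Proof.
move=> hodd hH njj hz h0 hA.
pose a i := Rm i j.
pose S0 := 1 + \sum_i `|a i|.
have S0pos : 0 < S0.
  have : 0 <= \sum_i `|a i| by apply: sumr_ge0 => i _.
  rewrite /S0; lra.
pose xi := S0^-1.
have xipos : 0 < xi by rewrite invr_gt0.
have small : forall i, `|xi * a i| < 1.
  move=> i; rewrite normrM (gtr0_norm xipos) mulrC ltr_pdivrMr // mul1r.
  have : `|a i| <= \sum_i `|a i|.
    rewrite (bigD1 i) //= lerDl; apply: sumr_ge0 => l _ //.
  rewrite /S0; lra.
pose c i := Rtrigo_def.cos (xi * a i).
pose s i := Rtrigo_def.sin (xi * a i).
suff hs : forall i, s i = 0.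
  move=> i; have := small_sin (small i) (hs i) => /eqP.
  by rewrite mulf_eq0 (gt_eqF xipos) /= => /eqP.
have [hu _] := hH.
have ro := row_orth hH.
pose p i := expi (xi * a i).
pose u i := H i j * p i.
pose S := \sum_l p l.
pose B := \sum_l u l * (H l j')^*.
have ex0 : expi 0 = 1 by rewrite /expi cos_0 sin_0.
have e1 : forall k, k != j -> k != j' -> \sum_l u l * (H l k)^* = 0.
  move=> k hk hk'; have [_ ho] := hA xi.
  rewrite -[RHS](ho j k); last by rewrite eq_sym.
  apply: eq_bigr => l _; by rewrite !mxE (hz l k) // !RmultE mulr0 ex0 mulr1.
have eA : \sum_l u l * (H l j)^* = S.
  apply: eq_bigr => l _; rewrite /u -mulrA [p l * _]mulrC mulrA unit_conj // mul1r //.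
have e2 : forall i, n.+1%:R * u i = H i j * S + H i j' * B.
  move=> i.
  have : \sum_k H i k * (\sum_l u l * (H l k)^*) = n.+1%:R * u i.
    rewrite (eq_bigr (fun k => \sum_l u l * (H i k * (H l k)^*))); last first.
      by move=> k _; rewrite mulr_sumr; apply: eq_bigr => l _; ring.
    rewrite exchange_big /=.
    rewrite (eq_bigr (fun l => u l * ((i == l)%:R * n.+1%:R))); last first.
      by move=> l _; rewrite -mulr_sumr ro.
    rewrite (bigD1 i) //= eqxx big1 ?addr0; first by rewrite mul1r mulrC.
    by move=> l hl; rewrite eq_sym (negbTE hl) mul0r mulr0.
  move=> <-.
  have njj' : j' != j by rewrite eq_sym.
  rewrite (bigD1 j) //= (bigD1 j' njj') /=.
  rewrite eA [X in _ + (_ + X)]big1 ?addr0 //.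
  by move=> k /andP [hk hk']; rewrite e1 // mulr0.
have e3 : forall i, `|n.+1%:R * p i - S| = `|B|.
  move=> i; have e := e2 i; rewrite /u in e.
  have e' : H i j * (n.+1%:R * p i - S) = H i j' * B.
    by rewrite mulrBr mulrCA e addrC addKr.
  by have := congr1 (@Num.norm _ _) e'; rewrite !normrM !hu !mul1r.
have ep : forall i, p i = (c i +i* s i)%C by [].
have eS : S = ((\sum_l c l) +i* (\sum_l s l))%C by rewrite -sumC.
apply: (core_real hodd (c:=c) (s:=s)).
- by move=> i; apply: cs1.
- by move=> i; apply: small_cos.
- by rewrite /c /a h0 ?RmultE mulr0; exact: cos_0.
- by rewrite /s /a h0 ?RmultE mulr0; exact: sin_0.
move=> i; have := e3 i; rewrite -(e3 ord0) => /(congr1 (fun z => z ^+ 2)).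
rewrite -!add_Re2_Im2 !ep eS !wform /= => /complexI //.
Qed.

Lemma had_tr n (M : 'M[complex R]_n.+1) :
  is_complex_hadamard M -> is_complex_hadamard M^T.
Proof.
move=> hM; have ro := row_orth hM; have [hu _] := hM; split.
  by move=> i j; rewrite mxE hu.
move=> j k njk.
rewrite (eq_bigr (fun i => M j i * (M k i)^*)); last by move=> i _; rewrite !mxE.
by rewrite ro (negbTE njk) mul0r.
Qed.

Lemma aff_tr n (H : 'M[complex R]_n.+1) (Rm : 'M[R]_n.+1) xi :
  affine_member H^T Rm^T xi = (affine_member H Rm xi)^T.
Proof. by apply/matrixP => i j; rewrite !mxE. Qed.

Lemma cols_zero n (H : 'M[complex R]_n.+1) (Rm : 'M[R]_n.+1) (j1 j2 : 'I_n.+1) :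
  odd n.+1 -> is_complex_hadamard H ->
  (forall i, Rm i ord0 = 0) -> (forall j, Rm ord0 j = 0) ->
  (forall i j, Rm i j != 0 -> j = j1 \/ j = j2) ->
  (forall xi, is_complex_hadamard (affine_member H Rm xi)) -> Rm = 0.
Proof.
move=> hodd hH hc hr supp hA.
have other : forall i k, k != j1 -> k != j2 -> Rm i k = 0.
  move=> i k h1 h2; case: (eqVneq (Rm i k) 0) => // /supp [e|e].
    by rewrite e eqxx in h1.
  by rewrite e eqxx in h2.
apply/matrixP => i k; rewrite mxE.
case: (eqVneq j1 j2) => [e|ne].
  subst j1; case: (eqVneq k j2) => [->|nk]; last by apply: other.
  case: (eqVneq j2 ord0) => [->|n0]; first by apply: hc.
  apply: (col_zero (H := H) (j' := ord0)) => //.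
  by move=> ? ? h _; apply: other.
case: (eqVneq k j1) => [->|n1].
  by apply: (col_zero (H := H) (j' := j2)) => // ? ? a b; apply: other.
case: (eqVneq k j2) => [->|n2]; last by apply: other.
by apply: (col_zero (H := H) (j' := j1)) => //; [rewrite eq_sym | move=> ? ? a b; apply: other].
Qed.

Theorem corollary2 (n : nat) (H : 'M[complex R]_n.+1) :
  odd n.+1 ->
  is_complex_hadamard H -> dephased H ->
  ~ exists Rm : 'M[R]_n.+1,
      [/\ Rm != 0, zero_first_row_col Rm,
          support_in_two_columns Rm \/ support_in_two_rows Rm &
          forall xi : R, is_complex_hadamard (affine_member H Rm xi)].
Proof.
move=> hodd hH _ [Rm [nz [hr hc] [[j1 [j2 h]] | [i1 [i2 h]]] hA]].
  by move: nz; rewrite (cols_zero hodd hH hc hr h hA) eqxx.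
have e : Rm^T = 0.
  apply: (cols_zero (j1 := i1) (j2 := i2) hodd (had_tr hH)).
  - by move=> i; rewrite mxE hr.
  - by move=> j; rewrite mxE hc.
  - by move=> i j; rewrite mxE => /h.
  - by move=> xi; rewrite aff_tr; apply: had_tr.
by move: nz; rewrite -(trmxK Rm) e trmx0 eqxx.
Qed.
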